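(* Let $\Phi=\forall u_1\ldots\forall u_n\exists e_1(D_1)\ldots\exists e_m(D_m).\varphi$ be a DQBF, let $A$ be a set of arbiter variables with arbiter clauses $\varphi_A$, let $\tau$ be a (partial) assignment to $A$, and let $\rho\in[U]$. Then $\varphi\wedge\varphi_A\wedge\tau\wedge\rho$ and $\varphi^\rho\wedge\tau^\rho$ are equisatisfiable.
   Context: For a set $V$ of variables, $[V]$ is the set of assignments $V\to\{\textsc{true},\textsc{false}\}$; an assignment is identified with the term (conjunction) of the literals it makes true, $\neg\sigma$ denotes the clause consisting of the negations of these literals, and $\sigma|_W$ denotes restriction. A DQBF is $\Phi=\forall u_1\ldots\forall u_n\exists e_1(D_1)\ldots\exists e_m(D_m).\varphi$ with pairwise distinct variables, $U=\{u_i\}$, $E=\{e_j\}$, dependency sets $D(e_j)=D_j\subseteq U$, and $\varphi$ a CNF over $U\cup E$. Arbiter variables: for $e\in E$ and $\sigma\in[D(e)]$, $e^\sigma$ is a fresh propositional variable (different annotations give different variables); for a literal $\ell$ on $e$, $\ell^\sigma$ is the literal on $e^\sigma$ of the same polarity. For a set $A$ of arbiter variables, the arbiter clauses are $\varphi_A=\bigwedge_{e^\sigma\in A}\big((e^\sigma\vee\neg\sigma\vee\neg e)\wedge(\neg e^\sigma\vee\neg\sigma\vee e)\big)$. For a partial assignment $\tau$ of $A$ (viewed as a set of arbiter literals) and $\rho\in[U]$, let $\tau^\rho=\{\ell^\sigma\in\tau\mid \rho\models\sigma\}$. For $\rho\in[U]$, the instantiation of $\varphi$ by $\rho$ is the CNF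 $\varphi^\rho=\{\{x^{\rho|_{D(\mathit{var}(x))}}\mid x\in C,\ \mathit{var}(x)\in E\}\mid C\in\varphi,\ \text{no universal literal of } C \text{ is satisfied by }\rho\}$, whose variables $e^{\rho|_{D(e)}}$ are identified with the arbiter variables of the same name. *)

(* Defs.v *)
From mathcomp Require Import all_boot.
Set Implicit Arguments. Unset Strict Implicit. Unset Printing Implicit Defensive.

(* An assignment sigma in [D(e_j)] is encoded by the subset S of D(e_j) of
   universals it sets to true (so S \subset D j); AV j S is e_j^sigma. *)
Inductive var (n m : nat) : Type :=
  | UV of 'I_n
  | EV of 'I_m
  | AV of 'I_m & {set 'I_n}.

Definition arbname (n m : nat) := ('I_m * {set 'I_n})%type.

Definition lit n m := (var n m * bool)%type.
Definition clause n m := seq (lit n m).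
Definition cnf n m := seq (clause n m).

Definition sat_lit n m (f : var n m -> bool) (l : lit n m) : bool := f l.1 == l.2.
Definition sat_clause n m (f : var n m -> bool) (C : clause n m) : bool :=
  has (sat_lit f) C.
Definition sat_cnf n m (f : var n m -> bool) (F : cnf n m) : bool :=
  all (sat_clause f) F.
Definition satisfiable n m (F : cnf n m) : Prop := exists f, sat_cnf f F.

Definition is_UE n m (x : var n m) : bool :=
  match x with AV _ _ => false | _ => true end.
Definition cnf_over_UE n m (F : cnf n m) : bool :=
  all (fun C => all (fun l => is_UE l.1) C) F.

Definition neg_assign n m (D : 'I_m -> {set 'I_n}) (j : 'I_m) (S : {set 'I_n})
  : clause n m := [seq (UV m i, i \notin S) | i <- enum (D j)].

Definition arbiter_clauses n m (D : 'I_m -> {set 'I_n}) (A : {set arbname n m})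
  : cnf n m :=
  flatten [seq [:: (AV a.1 a.2, true) :: (EV n a.1, false) :: neg_assign D a.1 a.2;
                   (AV a.1 a.2, false) :: (EV n a.1, true) :: neg_assign D a.1 a.2]
          | a <- enum A].

Definition tau_cnf n m (tau : {ffun arbname n m -> option bool}) : cnf n m :=
  [seq [:: (AV a.1 a.2, odflt false (tau a))] | a <- enum [pred a | tau a != None]].

Definition rho_cnf n m (rho : {ffun 'I_n -> bool}) : cnf n m :=
  [seq [:: (UV m i, rho i)] | i <- enum 'I_n].

Definition models n m (D : 'I_m -> {set 'I_n}) (rho : {ffun 'I_n -> bool})
  (a : arbname n m) : bool := [forall i in D a.1, rho i == (i \in a.2)].

Definition tau_rho_cnf n m (D : 'I_m -> {set 'I_n}) (tau : {ffun arbname n m -> option bool})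
  (rho : {ffun 'I_n -> bool}) : cnf n m :=
  [seq [:: (AV a.1 a.2, odflt false (tau a))]
  | a <- enum [pred a | (tau a != None) && models D rho a]].

Definition restr n m (D : 'I_m -> {set 'I_n}) (rho : {ffun 'I_n -> bool}) (j : 'I_m)
  : {set 'I_n} := [set i in D j | rho i].

Definition univ_sat n m (rho : {ffun 'I_n -> bool}) (l : lit n m) : bool :=
  match l.1 with UV i => rho i == l.2 | _ => false end.

Definition inst_lits n m (D : 'I_m -> {set 'I_n}) (rho : {ffun 'I_n -> bool})
  (C : clause n m) : clause n m :=
  flatten [seq match l.1 with
               | EV j => [:: (AV j (restr D rho j), l.2)]
               | _ => [::] end | l <- C].

Definition instantiate n m (D : 'I_m -> {set 'I_n}) (rho : {ffun 'I_n -> bool})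
  (F : cnf n m) : cnf n m :=
  [seq inst_lits D rho C | C <- F & ~~ has (univ_sat rho) C].

(* Main.v *)
Require Import Defs.
From mathcomp Require Import all_boot.

Lemma all_flat (T : Type) (p : pred T) (s : seq (seq T)) :
  all p (flatten s) = all (all p) s.
Proof. by elim: s => //= x s IH; rewrite all_cat IH. Qed.

Lemma models_restr n m (D : 'I_m -> {set 'I_n}) (rho : {ffun 'I_n -> bool}) (a : arbname n m) :
  models D rho a -> a.2 \subset D a.1 -> a.2 = restr D rho a.1.
Proof.
move=> Hm Hs; apply/setP => i; rewrite inE.
case Hi: (i \in D a.1).
  by move/forallP: Hm => /(_ i); rewrite Hi /= => /eqP ->.
apply/negbTE; apply: contraFN Hi; apply: (subsetP Hs).
Qed.

Lemma back_clause n m (D : 'I_m -> {set 'I_n}) (rho : {ffun 'I_n -> bool}) (g f : var n m -> bool) C :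
  (forall i, f (UV m i) = rho i) ->
  (forall j, f (EV n j) = g (AV j (restr D rho j))) ->
  has (univ_sat rho) C || sat_clause g (inst_lits D rho C) -> sat_clause f C.
Proof.
move=> Hu He; elim: C => //= [[x b] C] IH.
rewrite /sat_clause /= in IH *.
case: x => [i|j|j S] /=.
- rewrite /univ_sat /sat_lit /= Hu; case: (rho i == b) => //= H; exact: IH.
- rewrite /univ_sat /sat_lit /= He; case: (g _ == b) => //= H; exact: IH.
- rewrite /univ_sat /= => H; rewrite IH ?orbT //.
Qed.

Lemma fwd_clause n m (D : 'I_m -> {set 'I_n}) (rho : {ffun 'I_n -> bool}) (g f : var n m -> bool) C :
  (forall i, f (UV m i) = rho i) ->
  (forall j, g (AV j (restr D rho j)) = f (EV n j)) ->
  all (fun l => is_UE l.1) C -> sat_clause f C ->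
  has (univ_sat rho) C || sat_clause g (inst_lits D rho C).
Proof.
move=> Hu He; elim: C => //= [[x b] C] IH.
rewrite /sat_clause /= in IH *.
case: x => [i|j|j S] //=.
- rewrite /univ_sat /sat_lit /= Hu => /IH.
  by case: (rho i == b) => //=.
- move=> HC; rewrite /sat_lit /= He; case: (f _ == b) => /= H; first by rewrite orbT.
  by case/orP: (IH HC H)=> ->; rewrite ?orbT.
Qed.

Lemma neg_false n m (D : 'I_m -> {set 'I_n}) (rho : {ffun 'I_n -> bool}) (f : var n m -> bool) (a : arbname n m) :
  (forall i, f (UV m i) = rho i) -> models D rho a ->
  has (sat_lit f) (neg_assign D a.1 a.2) = false.
Proof.
move=> Hu Hm; rewrite /neg_assign has_map; apply/hasPn => i; rewrite mem_enum => Hi.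
rewrite /sat_lit /= Hu.
move/forallP: Hm => /(_ i); rewrite Hi /= => /eqP ->.
by case: (i \in a.2).
Qed.

Theorem lemma4 (n m : nat) (D : 'I_m -> {set 'I_n}) (phi : cnf n m)
  (A : {set arbname n m}) (tau : {ffun arbname n m -> option bool})
  (rho : {ffun 'I_n -> bool}) :
  cnf_over_UE phi ->
  (forall a, a \in A -> a.2 \subset D a.1) ->
  (forall a, tau a != None -> a \in A) ->
  (satisfiable (phi ++ arbiter_clauses D A ++ tau_cnf tau ++ rho_cnf m rho)
   <-> satisfiable (instantiate D rho phi ++ tau_rho_cnf D tau rho)).
Proof.
move=> HUE HsubA HtA; split.
- case=> f; rewrite /sat_cnf !all_cat => /and4P[Hphi Harb Htau Hrho].
  have Hu : forall i, f (UV m i) = rho i.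
    move=> i; move: Hrho; rewrite /rho_cnf all_map => /allP /(_ i (mem_enum _ i)).
    by rewrite /sat_clause /sat_lit /= orbF => /eqP.
  pose g (x : var n m) := match x with
    | AV j Sg => if Sg == restr D rho j then f (EV n j) else f x
    | _ => f x end.
  have He : forall j, g (AV j (restr D rho j)) = f (EV n j) by move=> j; rewrite /g eqxx.
  exists g; rewrite /sat_cnf all_cat; apply/andP; split.
    rewrite /instantiate all_map all_filter.
    move: HUE Hphi; rewrite /cnf_over_UE.
    elim: phi => //= C phi IH /andP[H1 H2] /andP[H3 H4].
    rewrite IH // andbT; apply/implyP => Hn.
    by move: (@fwd_clause n m D rho g f C Hu He H1 H3); rewrite (negbTE Hn).
  rewrite /tau_rho_cnf all_map; apply/allP => a; rewrite mem_enum inE => /andP[Ht Hm].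
  have Ha := HtA a Ht.
  have Hr := @models_restr n m D rho _ Hm (HsubA a Ha).
  rewrite /sat_clause /sat_lit /= orbF Hr eqxx.
  move: Htau; rewrite /tau_cnf all_map => /allP /(_ a); rewrite mem_enum inE => /(_ Ht).
  rewrite /sat_clause /sat_lit /= orbF => /eqP <-.
  move: Harb; rewrite /arbiter_clauses all_flat all_map => /allP /(_ a); rewrite mem_enum => /(_ Ha).
  rewrite /= /sat_clause /= /sat_lit /= (@neg_false n m D rho f a Hu Hm) !orbF andbT.
  by case: (f (AV _ _)); case: (f (EV _ _)).
- case=> g; rewrite /sat_cnf all_cat => /andP[Hphi Htr].
  pose f (x : var n m) := match x with
    | UV i => rho i
    | EV j => g (AV j (restr D rho j))
    | AV j Sg => if models D rho (j, Sg) then g (AV j (restr D rho j))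
                else odflt (g x) (tau (j, Sg)) end.
  have Hu : forall i, f (UV m i) = rho i by [].
  have He : forall j, f (EV n j) = g (AV j (restr D rho j)) by [].
  exists f; rewrite /sat_cnf !all_cat; apply/and4P; split.
  + move: Hphi; rewrite /instantiate all_map all_filter.
    elim: phi {HUE} => //= C phi IH /andP[H1 H2].
    rewrite IH // andbT; apply: (@back_clause n m D rho g f C Hu He).
    by case: (has _ C) H1 => //= ->.
  + rewrite /arbiter_clauses all_flat all_map; apply/allP => -[j S] Ha /=.
    rewrite /sat_clause /= /sat_lit /= andbT.
    case Hm: (models D rho (j, S)).
      by case: (g _).
    have -> : has (sat_lit f) (neg_assign D j S).
      move/negbT: Hm => /forallPn [i]; rewrite negb_imply => /andP[Hi Hne].
      rewrite /neg_assign has_map; apply/hasP; exists i; first by rewrite mem_enum.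
      by rewrite /sat_lit /=; move: Hne; case: (rho i); case: (i \in S).
    by rewrite !orbT.
  + rewrite /tau_cnf all_map; apply/allP => -[j S]; rewrite mem_enum inE => Ht.
    rewrite /sat_clause /sat_lit /= orbF.
    case Hm: (models D rho (j, S)).
      have Ha := HtA _ Ht.
      have Hr := @models_restr n m D rho _ Hm (HsubA _ Ha). simpl in Hr. rewrite -Hr.
      move: Htr; rewrite /tau_rho_cnf all_map => /allP /(_ (j, S)).
      rewrite mem_enum inE Ht Hm => /(_ isT).
      by rewrite /sat_clause /sat_lit /= orbF.
    by move: Ht; case: (tau (j, S)).
  + by rewrite /rho_cnf all_map; apply/allP => i _; rewrite /sat_clause /sat_lit /= eqxx.
Qed.
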